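(* Let $f:2^V\to\mathbb{Z}_{\ge0}$ be a connectivity function, $W\subseteq V$, and $(C_1,C_2,C_3)$ a tripartition of $V$ such that for each $i\in\{1,2,3\}$, $f(C_i)<f(W)/2$ and $W$ directly orients $C_i$. Then $(C_1,C_2,C_3)$ is a $W$-improvement.
   Context: A connectivity function $f:2^V\to\mathbb{Z}_{\ge0}$ ($V$ finite) satisfies $f(\emptyset)=0$, $f(X)=f(V\setminus X)$, and $f(X\cup Y)+f(X\cap Y)\le f(X)+f(Y)$. Write $\overline{X}=V\setminus X$. The set $W$ directly orients $C$ if $f(C\cap W)<f(\overline{C}\cap W)$ and $f(C\cap\overline{W})<f(\overline{C}\cap\overline{W})$. A tripartition of $V$ is a triple of pairwise disjoint (possibly empty) sets with union $V$. For $W\subseteq V$, a $W$-improvement is a tripartition $(C_1,C_2,C_3)$ of $V$ with $f(C_i)<f(W)/2$, $f(C_i\cap W)<f(W)$, $f(C_i\cap\overline{W})<f(W)$ for each $i$. *)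

(* Defs.v *)
From mathcomp Require Import all_boot.
Set Implicit Arguments. Unset Strict Implicit. Unset Printing Implicit Defensive.

Definition connectivity_function (V : finType) (f : {set V} -> nat) : Prop :=
  [/\ f set0 = 0,
      (forall X : {set V}, f X = f (~: X)) &
      (forall X Y : {set V}, f (X :|: Y) + f (X :&: Y) <= f X + f Y)].

Definition directly_orients (V : finType) (f : {set V} -> nat) (W C : {set V}) : Prop :=
  f (C :&: W) < f (~: C :&: W) /\ f (C :&: ~: W) < f (~: C :&: ~: W).

Definition tripartition (V : finType) (C1 C2 C3 : {set V}) : Prop :=
  [/\ [disjoint C1 & C2], [disjoint C1 & C3], [disjoint C2 & C3] &
      C1 :|: C2 :|: C3 = [set: V]].

(* f(C) < f(W)/2, stated exactly over nat as 2 f(C) < f(W) *)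
Definition half_lt (V : finType) (f : {set V} -> nat) (W C : {set V}) : Prop :=
  2 * f C < f W.

Definition W_improvement (V : finType) (f : {set V} -> nat) (W C1 C2 C3 : {set V}) : Prop :=
  tripartition C1 C2 C3 /\
  forall C, C \in [:: C1; C2; C3] ->
    [/\ half_lt f W C, f (C :&: W) < f W & f (C :&: ~: W) < f W].

(* Main.v *)
Require Import Defs.
From mathcomp Require Import all_boot.
From mathcomp Require Import zify.

Lemma key (V : finType) (f : {set V} -> nat) (W C : {set V}) :
  connectivity_function f -> 2 * f C < f W ->
  f (C :&: W) < f (~: C :&: W) -> f (C :&: W) < f W.
Proof.
case=> f0 fC fS hc ho.
have h1 := fS (C :&: ~: W) (~: C :&: ~: W).
have e1 : (C :&: ~: W) :|: (~: C :&: ~: W) = ~: W.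
  by rewrite -setIUl setUCr setTI.
have e2 : (C :&: ~: W) :&: (~: C :&: ~: W) = set0.
  by rewrite setIACA setICr set0I.
rewrite e1 e2 f0 -(fC W) in h1.
have h2 := fS W C.
have e3 : f (W :|: C) = f (~: C :&: ~: W).
  by rewrite fC setCU setIC.
rewrite e3 (setIC W C) in h2.
have h3 := fS W (~: C).
have e4 : f (W :|: ~: C) = f (C :&: ~: W).
  by rewrite fC setCU setCK setIC.
rewrite e4 -(fC C) [W :&: _]setIC in h3.
lia.
Qed.

Theorem lemma4 (V : finType) (f : {set V} -> nat) (W C1 C2 C3 : {set V}) :
  connectivity_function f ->
  tripartition C1 C2 C3 ->
  (forall C, C \in [:: C1; C2; C3] -> half_lt f W C /\ directly_orients f W C) ->
  W_improvement f W C1 C2 C3.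
Proof.
move=> hf ht H; split=> // C /H [hh [o1 o2]]; split=> //.
  exact: key.
have [_ fC _] := hf.
rewrite (fC W).
apply: key => //.
by rewrite -(fC W).
Qed.
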